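(* Let $G$ be a graph on $2n$ vertices and let $\mathbf{x}$ be a perfect fractional matching of $G$. Let $b>1$ and $M:=\{e\in E(G):\mathbf{x}_e\geq\frac bn\}$. Suppose $h(\mathbf{x})\geq n\log\frac n2$. Then $\sum_{e\in M}\mathbf{x}_e\leq\frac{4n}{\log b}$.
   Context: $\log=\log_2$. A perfect fractional matching of a graph $G$ is $\mathbf{x}\colon E(G)\to\mathbb{R}_{\geq0}$ with $\sum_{w\in N(v)}\mathbf{x}_{vw}=1$ for every vertex $v$. Its entropy is $h(\mathbf{x})=\sum_{e\in E(G)}\mathbf{x}_e\log\frac1{\mathbf{x}_e}$ (with $0\log\frac10:=0$). *)

(* Defs.v *)
From mathcomp Require Import all_boot all_order all_algebra.
From mathcomp Require Import all_classical all_reals all_analysis.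
Set Implicit Arguments. Unset Strict Implicit. Unset Printing Implicit Defensive.
Import Order.TTheory GRing.Theory Num.Theory.
Local Open Scope ring_scope.

Definition simple_graph (T : finType) (E : {set {set T}}) : Prop :=
  forall e, e \in E -> #|e| = 2%N.

Definition perfect_fractional_matching (R : realType) (T : finType)
  (E : {set {set T}}) (x : {set T} -> R) : Prop :=
  (forall e, e \in E -> 0 <= x e) /\
  (forall v : T, \sum_(e in E | v \in e) x e = 1).

Definition log2 (R : realType) (t : R) : R := ln t / ln 2.

Definition entropy (R : realType) (T : finType)
  (E : {set {set T}}) (x : {set T} -> R) : R :=
  \sum_(e in E) (if x e == 0 then 0 else x e * log2 (x e)^-1).

(* Main.v *)
Require Import Defs.
From mathcomp Require Import all_boot all_order all_algebra.
From mathcomp Require Import all_classical all_reals all_analysis.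
From mathcomp Require Import ring lra zify.
Import Order.TTheory GRing.Theory Num.Theory.
Local Open Scope ring_scope.

Lemma ln_le_sub1 {R : realType} (y : R) : 0 < y -> ln y <= y - 1.
Proof.
move=> y0; have := @le_ln1Dx R (y - 1).
rewrite addrCA subrr addr0; apply; lra.
Qed.

Lemma ln2_bounds (R : realType) : 1/2 <= ln (2 : R) <= 1.
Proof.
apply/andP; split; last by have := @ln_le_sub1 R 2; lra.
have := @ln_le_sub1 R (2^-1) ltac:(by []).
rewrite lnV ?posrE //; lra.
Qed.

Lemma sumx_eq (R : realType) (n : nat) (E : {set {set 'I_(2 * n)}})
  (x : {set 'I_(2 * n)} -> R) :
  simple_graph E -> perfect_fractional_matching E x ->
  \sum_(e in E) x e = n%:R.
Proof.
move=> sg [_ hv].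
have : \sum_(v : 'I_(2 * n)) \sum_(e in E | v \in e) x e = (2 * n)%:R.
  by rewrite (eq_bigr (fun _ => 1)) // sumr_const card_ord.
under eq_bigr do rewrite big_mkcondr /=.
rewrite exchange_big /=.
under eq_bigr => e eE.
  rewrite -big_mkcond /= sumr_const (sg e eE).
  over.
rewrite /= sumrMnl natrM => h.
have : 2 * \sum_(e in E) x e = 2 * n%:R.
  by rewrite mulr_natl h mulr_natl.
by move/(mulfI (x:=2)) => ->.
Qed.

Lemma pt_bound (R : realType) (N y : R) : 0 < N -> 0 < y ->
  y * ln y^-1 <= y * (ln 2 + ln N - 1) + (2 * N)^-1.
Proof.
move=> N0 y0.
have p2N : 0 < 2 * N by lra.
have pz : 0 < (2 * N * y)^-1 by rewrite invr_gt0 mulr_gt0.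
have h := ln_le_sub1 _ pz.
have e : ln (2 * N * y)^-1 = ln y^-1 - (ln 2 + ln N).
  rewrite -lnM ?posrE // -ln_div ?posrE ?invr_gt0 ?mulr_gt0 //.
  congr ln; field; apply/andP; split; apply: lt0r_neq0 => //; lra.
have e2 : y * (2 * N * y)^-1 = (2 * N)^-1.
  field; apply/andP; split; apply: lt0r_neq0 => //; lra.
rewrite e in h.
have : y * (ln y^-1 - (ln 2 + ln N)) <= y * ((2 * N * y)^-1 - 1).
  by rewrite ler_wpM2l //; lra.
rewrite !mulrBr e2 mulr1 => h2.
lra.
Qed.

Theorem lemma4p3 (R : realType) (n : nat) (E : {set {set 'I_(2 * n)}})
  (x : {set 'I_(2 * n)} -> R) (b : R) :
  simple_graph E ->
  perfect_fractional_matching E x ->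
  1 < b ->
  n%:R * log2 (n%:R / 2) <= entropy E x ->
  \sum_(e in E | b / n%:R <= x e) x e <= 4 * n%:R / log2 b.
Proof.
case: n E x => [|n] E x sg pfm b1 hyp.
  rewrite big1 ?mulr0 ?mul0r // => e /andP[eE _].
  have := max_card (mem e); rewrite card_ord sg //.
have sumx := @sumx_eq _ _ _ _ sg pfm.
have [x0 _] := pfm.
set N := n.+1%:R in sumx hyp *.
have N0 : 0 < N by rewrite ltr0n.
have [l2lo l2hi] := andP (@ln2_bounds R).
have lb0 : 0 < ln b by apply: ln_gt0.
set P := fun e => b / N <= x e.
pose g e := if x e == 0 then 0 else x e * ln (x e)^-1.
have hent : entropy E x = (\sum_(e in E) g e) / ln 2.
  rewrite /entropy mulr_suml; apply: eq_bigr => e _; rewrite /g /log2.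
  by case: ifP => _; rewrite ?mul0r // mulrA.
rewrite hent /log2 ler_pdivlMr ?mulrA in hyp; last lra.
rewrite ln_div ?posrE // in hyp.
have hS : \sum_(e in E | P e) g e <= (\sum_(e in E | P e) x e) * (ln N - ln b).
  rewrite mulr_suml; apply: ler_sum => e /andP[eE he].
  have xp : 0 < x e by apply: lt_le_trans he; rewrite divr_gt0 //; lra.
  rewrite /g gt_eqF // ler_wpM2l ?x0 // -ln_div ?posrE //; last lra.
  rewrite ler_ln ?posrE ?invr_gt0 ?divr_gt0 //; last lra.
  by rewrite -invf_div lef_pV2 ?posrE ?divr_gt0 //; lra.
have hT : \sum_(e in E | ~~ P e) g e <=
   (\sum_(e in E | ~~ P e) x e) * (ln 2 + ln N - 1) + \sum_(e in E | ~~ P e) (2 * N)^-1.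
  rewrite mulr_suml -big_split; apply: ler_sum => e /andP[eE _].
  have i0 : 0 < (2 * N)^-1 by rewrite invr_gt0; lra.
  rewrite /g; case: eqP => [->|/eqP xn0].
    by rewrite /= mul0r add0r ltW.
  rewrite /=; apply: pt_bound => //; rewrite lt_def xn0 x0 //.
have hC : \sum_(e in E | ~~ P e) (2 * N)^-1 <= N.
  have hc : (#|E| <= 2 * n.+1 * n.+1)%N.
    apply: (@leq_trans ('C(2 * n.+1, 2))).
      have hd := card_draws 'I_(2 * n.+1) 2; rewrite card_ord in hd; rewrite -hd.
      by apply: subset_leq_card; apply/fintype.subsetP => e eE; rewrite inE sg.
    by rewrite bin2 leq_half_double -!mul2n; nia.
  apply: le_trans (_ : \sum_(e in E) (2 * N)^-1 <= _).
    rewrite [X in _ <= X](bigID P) /= lerDr sumr_ge0 // => e _.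
    by rewrite invr_ge0; lra.
  rewrite sumr_const.
  have hc' : (#|E|%:R : R) <= 2 * N * N by rewrite /N -!natrM ler_nat.
  rewrite -[_ *+ #|E|]mulr_natr.
  apply: le_trans (_ : (2 * N)^-1 * (2 * N * N) <= _).
    rewrite ler_wpM2l // invr_ge0; lra.
  rewrite mulrA mulVf ?mul1r //; apply: lt0r_neq0; lra.
have [eg ex] : \sum_(e in E) g e = \sum_(e in E | P e) g e + \sum_(e in E | ~~ P e) g e
   /\ \sum_(e in E) x e = \sum_(e in E | P e) x e + \sum_(e in E | ~~ P e) x e.
  by split; apply: bigID.
rewrite eg in hyp; rewrite ex in sumx.
move: hS hT hC hyp sumx.
set S := \sum_(e in E | P e) x e.
set T := \sum_(e in E | ~~ P e) x e.
set C := \sum_(e in E | ~~ P e) (2 * N)^-1.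
set G1 := \sum_(e in E | P e) g e.
set G2 := \sum_(e in E | ~~ P e) g e.
move=> hS hT hC hyp sumx.
have S0 : 0 <= S by apply: sumr_ge0 => e /andP[eE _]; apply: x0.
have T0 : 0 <= T by apply: sumr_ge0 => e /andP[eE _]; apply: x0.
have eT : T = N - S by lra.
rewrite eT in hT.
rewrite /log2.
rewrite invf_div mulrA ler_pdivlMr //.
set l2 := ln 2 in hyp hT l2lo l2hi *.
set lN := ln N in hyp hS hT *.
set lb := ln b in hS lb0 *.
have hSN : S * (1 - l2) <= N * (1 - l2) by rewrite ler_wpM2r; lra.
rewrite divfK in hyp; last by apply: lt0r_neq0; lra.
nra.
Qed.
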